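(* Let $H_\theta:\mathbb{R}^n\to\mathbb{R}^D$ be injective and satisfy $\|H_\theta(x)-H_\theta(y)\|_2\ge\alpha\|x-y\|_2$ for all $x,y\in\mathbb{R}^n$, for some $\alpha\ge 0$. Let $w\in\mathbb{S}^{D-1}$ satisfy $\mathrm{dist}(w,s_\theta(\mathscr{P}))\ge\rho$. Then for all $x,y\in\mathbb{R}^n$, $$\|Q_wH_\theta(x)-Q_wH_\theta(y)\|_2\ge\frac{1}{\sqrt2}\rho\alpha\|x-y\|_2.$$
   Context: $\mathbb{S}^{D-1}$ is the unit sphere in $\mathbb{R}^D$; distances are Euclidean in $\mathbb{R}^D$. $\mathscr{P}=\{(x,y)\in\mathbb{R}^n\times\mathbb{R}^n: x\ne y\}$ and $s_\theta:\mathscr{P}\to\mathbb{S}^{D-1}$, $s_\theta(x,y)=\frac{H_\theta(x)-H_\theta(y)}{\|H_\theta(x)-H_\theta(y)\|_2}$. For a unit vector $w$, $Q_w:\mathbb{R}^D\to\mathbb{R}^D$ is $Q_w(z)=z-\langle z,w\rangle w$. *)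

(* Defs.v *)
From mathcomp Require Import all_boot all_order all_algebra.
From mathcomp Require Import all_classical all_reals.
Set Implicit Arguments. Unset Strict Implicit. Unset Printing Implicit Defensive.
Import Order.TTheory GRing.Theory Num.Theory.
Local Open Scope classical_set_scope.
Local Open Scope ring_scope.

Section Euclid.
Variable R : realType.

Definition edot (k : nat) (u v : 'rV[R]_k) : R := \sum_(i < k) u 0 i * v 0 i.
Definition enorm (k : nat) (u : 'rV[R]_k) : R := Num.sqrt (edot u u).

Definition edist_set (k : nat) (w : 'rV[R]_k) (S : set 'rV[R]_k) : R :=
  inf [set enorm (w - s) | s in S].

Definition pairsP (n : nat) : set ('rV[R]_n * 'rV[R]_n) :=
  [set p | p.1 <> p.2].

Definition secant (n D : nat) (H : 'rV[R]_n -> 'rV[R]_D)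
  (p : 'rV[R]_n * 'rV[R]_n) : 'rV[R]_D :=
  (enorm (H p.1 - H p.2))^-1 *: (H p.1 - H p.2).

Definition Qproj (D : nat) (w z : 'rV[R]_D) : 'rV[R]_D := z - edot z w *: w.
End Euclid.

(* Main.v *)
Require Import Defs.
From mathcomp Require Import all_boot all_order all_algebra.
From mathcomp Require Import all_classical all_reals.
From mathcomp Require Import ring lra.
Import Order.TTheory GRing.Theory Num.Theory.
Local Open Scope classical_set_scope.
Local Open Scope ring_scope.

Set Implicit Arguments.
Section H.
Variable R : realType.

Lemma edot_sym k (u v : 'rV[R]_k) : edot u v = edot v u.
Proof. by apply: eq_bigr => i _; rewrite mulrC. Qed.


Lemma edot_lin k (a b : R) (u v z : 'rV[R]_k) :
  edot (a *: u + b *: v) z = a * edot u z + b * edot v z.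
Proof.
rewrite /edot !mulr_sumr -big_split /=; apply: eq_bigr => i _.
rewrite !mxE; ring.
Qed.

Lemma edot_quad k (a b : R) (u v : 'rV[R]_k) :
  edot (a *: u + b *: v) (a *: u + b *: v) =
  a ^+ 2 * edot u u + 2 * a * b * edot u v + b ^+ 2 * edot v v.
Proof.
rewrite edot_lin (edot_sym u) (edot_sym v) !edot_lin (edot_sym v u); ring.
Qed.

Lemma edot_ge0 k (u : 'rV[R]_k) : 0 <= edot u u.
Proof. by apply: sumr_ge0 => i _; rewrite -expr2 sqr_ge0. Qed.

Lemma enorm_ge0 k (u : 'rV[R]_k) : 0 <= enorm u.
Proof. exact: sqrtr_ge0. Qed.

Lemma enorm_sq k (u : 'rV[R]_k) : enorm u ^+ 2 = edot u u.
Proof. by rewrite /enorm sqr_sqrtr // edot_ge0. Qed.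

End H.
Arguments edot_sym {R k}.
Arguments edot_lin {R k}.
Arguments edot_quad {R k}.
Arguments edot_ge0 {R k}.
Arguments enorm_ge0 {R k}.
Arguments enorm_sq {R k}.

Theorem lemma12 (R : realType) (n D : nat) (H : 'rV[R]_n -> 'rV[R]_D)
  (alpha rho : R) (w : 'rV[R]_D) :
  injective H ->
  0 <= alpha ->
  (forall x y : 'rV[R]_n, enorm (H x - H y) >= alpha * enorm (x - y)) ->
  enorm w = 1 ->
  edist_set w (secant H @` @pairsP R n) >= rho ->
  forall x y : 'rV[R]_n,
    enorm (Qproj w (H x) - Qproj w (H y)) >=
      (Num.sqrt 2)^-1 * rho * alpha * enorm (x - y).
Proof.
move=> Hinj ha Hlip Hw Hrho x y.
set s := Num.sqrt 2.
have s0 : 0 < s by rewrite sqrtr_gt0.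
have s2 : s ^+ 2 = 2 by rewrite sqr_sqrtr.
set k := s^-1.
have k0 : 0 <= k by rewrite invr_ge0 ltW.
have k2 : k ^+ 2 * 2 = 1 by rewrite /k -s2 exprVn mulVf // expf_neq0 // gt_eqF.
have LHS0 := enorm_ge0 (Qproj w (H x) - Qproj w (H y)).
have [rn|rp] := ltP rho 0.
  have : 0 <= alpha * enorm (x - y) by rewrite mulr_ge0 // enorm_ge0.
  move=> h; apply: le_trans LHS0.
  rewrite -!mulrA mulr_ge0_le0 // mulr_le0_ge0 // ltW //.
have [exy|nxy] := eqVneq x y.
  have -> : enorm (x - y) = 0.
    by rewrite exy subrr /enorm /edot big1 ?sqrtr0 // => i _; rewrite mxE mul0r.
  by rewrite mulr0.
set v := H x - H y.
have HQ : Qproj w (H x) - Qproj w (H y) = 1 *: v + (- edot v w) *: w.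
  rewrite /Qproj /v.
  have -> : edot (H x - H y) w = edot (H x) w - edot (H y) w.
    by rewrite /edot -sumrB; apply: eq_bigr => i _; rewrite !mxE; ring.
  by apply/rowP => i; rewrite !mxE; ring.
rewrite HQ.
set N := enorm v.
have N0 : 0 <= N := enorm_ge0 v.
have Hl := Hlip x y. rewrite -/v -/N in Hl.
set p := edot v v. set q := edot v w.
have pN : p = N ^+ 2 by rewrite enorm_sq.
have ww : edot w w = 1 by rewrite -enorm_sq Hw expr1n.
have [N00|Npos] := eqVneq N 0.
  apply: le_trans (enorm_ge0 _).
  rewrite N00 in Hl.
  by rewrite -mulrA mulr_ge0_le0 ?mulr_ge0 //.
have Ngt : 0 < N by rewrite lt_neqAle eq_sym Npos N0.
have hlb : has_lbound [set enorm (w - z0) | z0 in secant H @` @pairsP R n].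
  by exists 0 => z [t _ <-]; apply: enorm_ge0.
have lbf := ge_inf hlb.
have B1 : rho <= enorm (1 *: w + (- N^-1) *: v).
  apply: le_trans Hrho _; apply: lbf; exists (secant H (x, y)).
    by exists (x, y) => //; apply/eqP.
  by rewrite /secant /= scale1r scaleNr.
have B2 : rho <= enorm (1 *: w + N^-1 *: v).
  apply: le_trans Hrho _; apply: lbf; exists (secant H (y, x)).
    by exists (y, x) => //; apply/eqP; rewrite eq_sym.
  rewrite /secant /= scale1r -/v.
  have -> : H y - H x = - v by rewrite opprB.
  have -> : enorm (- v) = N.
    by rewrite /N /enorm /edot; congr Num.sqrt; apply: eq_bigr => i _; rewrite !mxE; ring.
  by rewrite scalerN opprK.
have E1 := enorm_sq (1 *: w + (- N^-1) *: v).
have E2 := enorm_sq (1 *: w + N^-1 *: v).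
have E3 := enorm_sq (1 *: v + (- q) *: w).
rewrite !edot_quad ww -/p -/q (edot_sym w v) -/q in E1 E2 E3.
set t := q / N.
have qt : q = t * N by rewrite /t mulrVK // unitfE.
have NV : N^-1 * N = 1 by rewrite mulVf.
have F1 : rho ^+ 2 <= 2 - 2 * t.
  have : rho ^+ 2 <= enorm (1 *: w + (- N^-1) *: v) ^+ 2 by rewrite ler_sqr ?nnegrE ?enorm_ge0.
  rewrite E1 pN qt. move=> h; apply: (le_trans h); rewrite le_eqVlt; apply/orP; left; apply/eqP.
  rewrite /t; field; exact: Npos.
have F2 : rho ^+ 2 <= 2 + 2 * t.
  have : rho ^+ 2 <= enorm (1 *: w + N^-1 *: v) ^+ 2 by rewrite ler_sqr ?nnegrE ?enorm_ge0.
  rewrite E2 pN qt. move=> h; apply: (le_trans h); rewrite le_eqVlt; apply/orP; left; apply/eqP.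
  rewrite /t; field; exact: Npos.
have F3 : enorm (1 *: v + - q *: w) ^+ 2 = N ^+ 2 * (1 - t ^+ 2).
  by rewrite E3 pN qt; ring.
have key : rho ^+ 2 <= 2 * (1 - t ^+ 2).
  have [tp|tn] := leP 0 t; nra.
set L := enorm (1 *: v + - q *: w).
have L0 : 0 <= L := enorm_ge0 _.
have : (k * rho * N) ^+ 2 <= L ^+ 2.
  have -> : (k * rho * N) ^+ 2 = k ^+ 2 * rho ^+ 2 * N ^+ 2 by ring.
  rewrite F3.
  have h1 : k ^+ 2 * rho ^+ 2 <= 1 - t ^+ 2.
    have := ler_wpM2l (exprn_ge0 2 k0) key. 
    by rewrite [k ^+ 2 * (2 * _)]mulrA k2 mul1r.
  by rewrite [X in _ <= X]mulrC; apply: ler_wpM2r h1; rewrite exprn_ge0.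
rewrite ler_sqr ?nnegrE ?mulr_ge0 // => h.
apply: le_trans h; rewrite -mulrA ler_wpM2l ?mulr_ge0 //.
Qed.
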